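(* Let $\alpha\in(0,1)$. For all density operators $\varrho,\sigma$ on a finite-dimensional Hilbert space, $\overline{D}_\alpha^{\mathrm{test}}(\varrho\|\sigma)\ge0$, with equality if and only if $\varrho=\sigma$.
   Context: For probability vectors $p,q$ and $\alpha\in(0,1)$, $D_\alpha(p\|q)=\frac{1}{\alpha-1}\log\sum_xp(x)^\alpha q(x)^{1-\alpha}$. A test is an operator $0\le T\le I$; $\mathcal T(X):=(\operatorname{Tr}XT,\operatorname{Tr}X(I-T))$; $D_\alpha^{\mathrm{test}}(\varrho\|\sigma):=\max_{0\le T\le I}D_\alpha(\mathcal T(\varrho)\|\mathcal T(\sigma))$; $\overline{D}_\alpha^{\mathrm{test}}(\varrho\|\sigma):=\limsup_n\frac1nD_\alpha^{\mathrm{test}}(\varrho^{\otimes n}\|\sigma^{\otimes n})$. *)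

(* Defs.v *)
From HB Require Import structures.
From mathcomp Require Import all_boot all_order all_algebra.
From mathcomp Require Import sesquilinear.
From mathcomp Require Import all_classical all_reals all_analysis.
From mathcomp Require Import complex mxtens.

Set Implicit Arguments.
Unset Strict Implicit.
Unset Printing Implicit Defensive.

Import Order.TTheory GRing.Theory Num.Theory.
Local Open Scope ring_scope.
Local Open Scope classical_set_scope.

Definition psdmx (R : realType) (n : nat) (A : 'M[R[i]]_n) : Prop :=
  A \is hermsymmx /\
  forall v : 'rV[R[i]]_n, 0 <= (v *m A *m (map_mx Num.conj v)^T) 0 0.

Definition density (R : realType) (n : nat) (A : 'M[R[i]]_n) : Prop :=
  psdmx A /\ \tr A = 1.

Definition is_test (R : realType) (n : nat) (T : 'M[R[i]]_n) : Prop :=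
  psdmx T /\ psdmx (1%:M - T).

(* Classical alpha-Renyi divergence of probability vectors indexed by a
   finite type, with values in the extended reals:
   D_alpha(p||q) = 1/(alpha-1) log sum_x p(x)^alpha q(x)^(1-alpha),
   with 0^a = 0 for a > 0 and log 0 = -oo, so an empty overlap
   (sum = 0) gives +oo since alpha - 1 < 0. *)
Definition renyi_div (R : realType) (alpha : R) (I : finType) (p q : I -> R)
  : \bar R :=
  let s := \sum_(x : I) (p x `^ alpha) * (q x `^ (1 - alpha)) in
  if s == 0 then +oo%E else (((alpha - 1)^-1) * ln s)%:E.

(* Measurement channel of a test: X |-> (Tr X T, Tr X (I - T)).
   Tr X T is real for Hermitian X, T; we take its real part. *)
Definition test_channel (R : realType) (n : nat) (T X : 'M[R[i]]_n)
  : bool -> R :=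
  fun b => if b then complex.Re (\tr (X *m T))
           else complex.Re (\tr (X *m (1%:M - T))).

(* D^test_alpha(rho||sigma) = max over tests (a sup, attained). *)
Definition D_test (R : realType) (alpha : R) (n : nat) (rho sigma : 'M[R[i]]_n)
  : \bar R :=
  ereal_sup [set renyi_div alpha (test_channel T rho) (test_channel T sigma)
            | T in [set T : 'M[R[i]]_n | is_test T]].

Definition D_test_bar (R : realType) (alpha : R) (n : nat)
  (rho sigma : 'M[R[i]]_n) : \bar R :=
  limn_esup (fun k : nat =>
    ((k%:R : R)^-1)%:E * D_test alpha (ntensmx rho k) (ntensmx sigma k))%E.

(* Main.v *)
Require Import Defs.
From HB Require Import structures.
From mathcomp Require Import all_boot all_order all_algebra.
From mathcomp Require Import sesquilinear spectral.
From mathcomp Require Import all_classical all_reals all_analysis.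
From mathcomp Require Import complex mxtens.
From mathcomp Require Import ring lra.
Set Implicit Arguments.
Unset Strict Implicit.
Unset Printing Implicit Defensive.
Import Order.TTheory GRing.Theory Num.Theory.
Local Open Scope ring_scope.
Section Tens.
Variable R : realType.
Local Notation C := (R[i]).
Local Notation adj M := (map_mx Num.conj (trmx M)).

Lemma tens11 m n : (1%:M : 'M[C]_m) *t (1%:M : 'M[C]_n) = 1%:M.
Proof.
apply/matrixP=> x y.
case: (mxtens_indexP x)=> i j; case: (mxtens_indexP y)=> k l.
rewrite tensmxE !mxE (inj_eq (can_inj (@mxtens_indexK m n))) xpair_eqE.
by case: (i == k); case: (j == l); rewrite /= ?mulr1 ?mulr0 ?mul0r.
Qed.

Lemma adj_tens m n p q (A : 'M[C]_(m,n)) (B : 'M[C]_(p,q)) :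
  adj (A *t B) = adj A *t adj B.
Proof. by rewrite trmx_tens map_mxT. Qed.

Lemma tr_tens m n (A : 'M[C]_m) (B : 'M[C]_n) : \tr (A *t B) = \tr A * \tr B.
Proof.
rewrite /mxtrace mulr_sum; apply: eq_bigr => x _; by rewrite !mxE.
Qed.

Lemma ntens_mul n k (A B : 'M[C]_n) :
  ntensmx A k.+1 *m ntensmx B k.+1 = ntensmx (A *m B) k.+1.
Proof.
elim: k => [|k IH]; first by [].
by rewrite !ntensmxSS tensmx_mul IH.
Qed.

Lemma ntens_adj n k (A : 'M[C]_n) : adj (ntensmx A k.+1) = ntensmx (adj A) k.+1.
Proof.
elim: k => [|k IH]; first by [].
by rewrite !ntensmxSS adj_tens IH.
Qed.

Lemma ntens1 n k : ntensmx (1%:M : 'M[C]_n) k.+1 = 1%:M.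
Proof.
elim: k => [|k IH]; first by [].
by rewrite !ntensmxSS IH tens11.
Qed.

Lemma ntens_tr n k (A : 'M[C]_n) : \tr (ntensmx A k) = (\tr A) ^+ k.
Proof.
case: k => [|k]; first by rewrite ntensmx0 mxtrace1 expr0.
elim: k => [|k IH]; first by rewrite expr1 ntensmx1.
by rewrite ntensmxSS tr_tens IH [RHS]exprS.
Qed.

End Tens.
Section Psd.
Variable R : realType.
Local Notation C := (R[i]).
Local Notation adj M := (map_mx Num.conj (trmx M)).

Lemma adjK m n (A : 'M[C]_(m,n)) : adj (adj A) = A.
Proof.
apply/matrixP => i j; by rewrite !mxE conjCK.
Qed.

Lemma adj_mul m n p (A : 'M[C]_(m,n)) (B : 'M[C]_(n,p)) :
  adj (A *m B) = adj B *m adj A.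
Proof. by rewrite trmx_mul map_mxM. Qed.

Lemma adj_diag N (d : 'rV[C]_N) : (forall i, 0 <= d 0 i) -> adj (diag_mx d) = diag_mx d.
Proof.
move=> d0; apply/matrixP => i j; rewrite !mxE.
case: (i =P j) => [->|/eqP ne]; first by rewrite eqxx !mulr1n geC0_conj.
by rewrite eq_sym (negbTE ne) !mulr0n conjC0.
Qed.

Lemma quad_diag N (w : 'rV[C]_N) (d : 'rV[C]_N) :
  (w *m diag_mx d *m adj w) 0 0 = \sum_j d 0 j * (w 0 j * (w 0 j)^*).
Proof.
rewrite mul_mx_diag !mxE; apply: eq_bigr => j _; rewrite !mxE.
by rewrite mulrCA mulrA.
Qed.

Lemma psd_udu N (U : 'M[C]_N) (d : 'rV[C]_N) :
  (forall i, 0 <= d 0 i) -> psdmx (adj U *m diag_mx d *m U).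
Proof.
move=> d0; split.
  apply/is_hermitianmxP; rewrite expr0 scale1r.
  by rewrite !adj_mul adjK adj_diag // mulmxA.
move=> v; have -> : (map_mx Num.conj v)^T = adj v by rewrite map_trmx.
have -> : v *m (adj U *m diag_mx d *m U) *m adj v
   = (v *m adj U) *m diag_mx d *m adj (v *m adj U).
  by rewrite adj_mul adjK !mulmxA.
rewrite quad_diag; apply: sumr_ge0 => j _.
by apply: mulr_ge0 => //; apply: mul_conjC_ge0.
Qed.

End Psd.
Section Dg.
Variable R : realType.
Local Notation C := (R[i]).
Local Notation cr x := (real_complex R x).

Fixpoint dg n (f : 'I_n -> R) k : 'I_(n ^ k.+1) -> R :=
  if k is k'.+1 return 'I_(n ^ k.+1) -> R
  then fun x => f (mxtens_unindex x).1 * @dg n f k' (mxtens_unindex x).2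
  else f.
Arguments dg {n} f k.

Lemma dg_sum n (f : 'I_n -> R) k : \sum_x dg f k x = (\sum_i f i) ^+ k.+1.
Proof.
elim: k => [|k IH]; first by rewrite expr1.
rewrite [RHS]exprS -IH mulr_sum; by [].
Qed.

Lemma dg_ge0 n (f : 'I_n -> R) k x : (forall i, 0 <= f i) -> 0 <= dg f k x.
Proof.
move=> f0; elim: k x => [|k IH] x /=; first exact: f0.
by rewrite mulr_ge0.
Qed.

Lemma dg_w n (a : R) (p q : 'I_n -> R) k x : (forall i, 0 <= p i) -> (forall i, 0 <= q i) ->
  dg p k x `^ a * dg q k x `^ (1 - a) = dg (fun i => p i `^ a * q i `^ (1 - a)) k x.
Proof.
move=> p0 q0; elim: k x => [|k IH] x //=.
rewrite !powRM ?dg_ge0 // -IH.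
by rewrite mulrACA.
Qed.

Lemma ntens_diag n (M : 'M[C]_n) (p : 'I_n -> R) k x :
  (forall i, M i i = cr (p i)) -> ntensmx M k.+1 x x = cr (dg p k x).
Proof.
move=> Mp; elim: k x => [|k IH] x; first exact: Mp.
by rewrite ntensmxSS mxE Mp IH /= rmorphM.
Qed.

End Dg.
Arguments dg {R n} f k.
Section Classical.
Variable R : realType.

Lemma exp_tangent (z u : R) : expR z * (1 + (u - z)) <= expR u.
Proof.
have -> : expR u = expR z * expR (u - z) by rewrite -expRD addrC subrK.
by rewrite ler_pM2l ?expR_gt0 // expR_ge1Dx.
Qed.

Lemma exp_tangent_lt (z u : R) : u != z -> expR z * (1 + (u - z)) < expR u.
Proof.
move=> uz; have -> : expR u = expR z * expR (u - z) by rewrite -expRD addrC subrK.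
by rewrite ltr_pM2l ?expR_gt0 // expR_gt1Dx // subr_eq0.
Qed.

Lemma wamgm_lt (a x y : R) : 0 < a < 1 -> 0 <= x -> 0 <= y -> x != y ->
  x `^ a * y `^ (1 - a) < a * x + (1 - a) * y.
Proof.
move=> /andP[a0 a1] x0 y0 xy.
have a0' : a != 0 by rewrite gt_eqF.
have a1' : 1 - a != 0 by rewrite subr_eq0 eq_sym lt_eqF.
have [xe|xn0] := eqVneq x 0.
  rewrite xe in xy *; rewrite powR0 // mul0r mulr0 add0r mulr_gt0 ?subr_gt0 //.
  by rewrite lt_neqAle xy y0.
have [ye|yn0] := eqVneq y 0.
  rewrite ye in xy *; rewrite [0 `^ _]powR0 // mulr0 mulr0 addr0 mulr_gt0 //.
  by rewrite lt_neqAle eq_sym xn0 x0.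
have xp : 0 < x by rewrite lt_neqAle eq_sym xn0 x0.
have yp : 0 < y by rewrite lt_neqAle eq_sym yn0 y0.
rewrite /powR (negbTE xn0) (negbTE yn0) -expRD.
set u := ln x; set v := ln y.
have -> : x = expR u by rewrite /u lnK.
have -> : y = expR v by rewrite /v lnK.
set z := a * u + (1 - a) * v.
have uv : u != v.
  apply: contra xy => /eqP uv; apply/eqP; apply: (ln_inj); by rewrite ?posrE.
have uz : u != z.
  rewrite /z; apply: contra uv => /eqP h; apply/eqP.
  have : (1 - a) * (u - v) = 0 by rewrite mulrBr; lra.
  move/eqP; rewrite mulf_eq0 (negbTE a1') /= subr_eq0 => /eqP; done.
have h1 := exp_tangent_lt uz.
have h2 := exp_tangent z v.
have id1 : a * (expR z * (1 + (u - z))) + (1 - a) * (expR z * (1 + (v - z))) = expR z.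
  rewrite /z; ring.
rewrite -[X in X < _]id1.
apply: ltr_leD.
  by rewrite ltr_pM2l.
by rewrite ler_wpM2l // subr_ge0 ltW.
Qed.

Lemma powR_self (a x : R) : 0 <= x -> x `^ a * x `^ (1 - a) = x.
Proof.
move=> x0; rewrite -powRD; last by rewrite addrC subrK oner_eq0.
by rewrite addrC subrK powRr1.
Qed.

Lemma wamgm_le (a x y : R) : 0 < a < 1 -> 0 <= x -> 0 <= y ->
  x `^ a * y `^ (1 - a) <= a * x + (1 - a) * y.
Proof.
move=> ha x0 y0; have [->|xy] := eqVneq x y.
  by rewrite powR_self // -mulrDl addrC subrK mul1r.
by apply/ltW/wamgm_lt.
Qed.

Lemma fid_lt1 (a : R) n (p q : 'I_n -> R) j : 0 < a < 1 ->
  (forall i, 0 <= p i) -> (forall i, 0 <= q i) ->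
  \sum_i p i = 1 -> \sum_i q i = 1 -> p j != q j ->
  \sum_i p i `^ a * q i `^ (1 - a) < 1.
Proof.
move=> ha p0 q0 sp sq pq.
apply: (@lt_le_trans _ _ (\sum_i (a * p i + (1 - a) * q i))); last first.
  by rewrite big_split /= -!mulr_sumr sp sq !mulr1 addrC subrK.
rewrite [X in X < _](bigD1 j) // [X in _ < X](bigD1 j) //=.
apply: ltr_leD; first by apply: wamgm_lt.
by apply: ler_sum => i _; apply: wamgm_le.
Qed.

End Classical.
Section Bound.
Variable R : realType.

Lemma powR_mono (r x y : R) : 0 <= r -> 0 <= x -> x <= y -> x `^ r <= y `^ r.
Proof.
move=> r0 x0 xy; apply: (ge0_ler_powR r0) => //; rewrite nnegrE //.
exact: le_trans xy.
Qed.

Lemma key_bound (a : R) N (P Q : 'I_N -> R) G :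
  0 < a < 1 -> (forall x, 0 <= P x) -> (forall x, 0 <= Q x) ->
  \sum_x P x = 1 -> \sum_x Q x = 1 ->
  \sum_x P x `^ a * Q x `^ (1 - a) <= G ->
  (\sum_(x | Q x <= P x) P x) `^ a * (\sum_(x | Q x <= P x) Q x) `^ (1 - a)
  + (\sum_(x | ~~ (Q x <= P x)) P x) `^ a * (\sum_(x | ~~ (Q x <= P x)) Q x) `^ (1 - a)
  <= G `^ (1 - a) + G `^ a.
Proof.
move=> /andP[a0 a1] P0 Q0 sP sQ sG.
set PA := \sum_(x | Q x <= P x) P x; set PB := \sum_(x | ~~ (Q x <= P x)) P x.
set QA := \sum_(x | Q x <= P x) Q x; set QB := \sum_(x | ~~ (Q x <= P x)) Q x.
set w := fun x => P x `^ a * Q x `^ (1 - a).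
have w0 x : 0 <= w x by rewrite /w mulr_ge0 ?powR_ge0.
have PA0 : 0 <= PA by apply: sumr_ge0.
have PB0 : 0 <= PB by apply: sumr_ge0.
have QA0 : 0 <= QA by apply: sumr_ge0.
have QB0 : 0 <= QB by apply: sumr_ge0.
have PAB : PA + PB = 1 by rewrite -sP (bigID (fun x => Q x <= P x)).
have QAB : QA + QB = 1 by rewrite -sQ (bigID (fun x => Q x <= P x)).
have wAB : \sum_(x | Q x <= P x) w x + \sum_(x | ~~ (Q x <= P x)) w x <= G.
  by move: sG; rewrite (bigID (fun x => Q x <= P x)) /=.
have wA0 : 0 <= \sum_(x | Q x <= P x) w x by apply: sumr_ge0.
have wB0 : 0 <= \sum_(x | ~~ (Q x <= P x)) w x by apply: sumr_ge0.
have QAG : QA <= G.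
  apply: (@le_trans _ _ (\sum_(x | Q x <= P x) w x)); last by lra.
  apply: ler_sum => x QP; rewrite /w -{1}(powR_self a (Q0 x)).
  by rewrite ler_wpM2r ?powR_ge0 // powR_mono // ltW.
have PBG : PB <= G.
  apply: (@le_trans _ _ (\sum_(x | ~~ (Q x <= P x)) w x)); last by lra.
  apply: ler_sum => x; rewrite -ltNge => PQ; rewrite /w -{1}(powR_self a (P0 x)).
  by rewrite ler_wpM2l ?powR_ge0 // powR_mono // ?subr_ge0 ?ltW.
have G0 : 0 <= G by lra.
have h1 : PA `^ a * QA `^ (1 - a) <= G `^ (1 - a).
  rewrite -[X in _ <= X]mul1r; apply: ler_pM; rewrite ?powR_ge0 //.
    have := @powR_mono a PA 1 (ltW a0) PA0 ltac:(lra); by rewrite powR1.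
  by rewrite powR_mono // subr_ge0 ltW.
have h2 : PB `^ a * QB `^ (1 - a) <= G `^ a.
  rewrite -[X in _ <= X]mulr1; apply: ler_pM; rewrite ?powR_ge0 //.
    by rewrite powR_mono // ltW.
  have := @powR_mono (1 - a) QB 1 ltac:(lra) QB0 ltac:(lra); by rewrite powR1.
by apply: lerD.
Qed.

End Bound.
Section Asym.
Variable R : realType.
Local Open Scope ereal_scope.

Lemma asym (a F : R) : (0 < a < 1)%R -> (0 <= F < 1)%R ->
  exists c : R, (0 < c)%R /\ exists K : nat, forall k, (K <= k)%N ->
  forall S : R, (0 <= S)%R -> (S <= (F ^+ k.+1) `^ (1 - a) + (F ^+ k.+1) `^ a)%R ->
  (c * k.+1%:R)%:E <= (if S == 0%R then +oo else ((a - 1)^-1 * ln S)%:E).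
Proof.
move=> /andP[a0 a1] /andP[F0 F1].
have [Fe|Fn0] := eqVneq F 0%R.
  exists 1%R; split => //; exists 0%N => k _ S S0.
  rewrite Fe expr0n /= !powR0 ?addr0; last 2 first.
  - by apply/eqP; lra.
  - by apply/eqP; lra.
  move=> SS; have -> : S = 0%R by apply/le_anti; rewrite S0 SS.
  by rewrite eqxx leey.
have Fp : (0 < F)%R by rewrite lt_neqAle eq_sym Fn0.
set m := (Num.min a (1 - a))%R.
have m0 : (0 < m)%R by rewrite /m lt_min a0 subr_gt0.
have ma : (m <= a)%R by rewrite /m ge_min lexx.
have ma' : (m <= 1 - a)%R by rewrite /m ge_min lexx orbT.
have lnF : (ln F < 0)%R by apply: ln_lt0; rewrite Fp.
set L := (- (m * ln F))%R.
have L0 : (0 < L)%R by rewrite /L oppr_gt0 pmulr_rlt0.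
have ia0 : (0 < (1 - a)^-1)%R by rewrite invr_gt0 subr_gt0.
exists ((1 - a)^-1 * L / 2)%R; split.
  by rewrite divr_gt0 // mulr_gt0.
exists (Num.Def.trunc (2 * ln 2 / L)) => k Kk S S0 SS.
have [Se|Sn0] := eqVneq S 0%R; first by subst S; exact: leey.

rewrite lee_fin.
have Sp : (0 < S)%R by rewrite lt_neqAle eq_sym Sn0.
set G := (F ^+ k.+1)%R.
have Gp : (0 < G)%R by rewrite exprn_gt0.
have G1 : (G <= 1)%R by rewrite exprn_ile1 // ltW.
have hG1 : (G `^ (1 - a) <= G `^ m)%R by apply: ger_powR; rewrite ?Gp.
have hG2 : (G `^ a <= G `^ m)%R by apply: ger_powR; rewrite ?Gp.
have S2 : (S <= 2 * G `^ m)%R by lra.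
have lnS : (ln S <= ln 2 + m * (ln F *+ k.+1))%R.
  rewrite -lnXn // -ln_powR -lnM ?posrE ?powR_gt0 //.
  by rewrite ler_ln // ?posrE // ?mulr_gt0 ?powR_gt0.
have kK : (2 * ln 2 / L < k.+1%:R)%R.
  apply: (lt_le_trans (truncnS_gt _)); by rewrite ler_nat ltnS.
have kL : (2 * ln 2 <= k.+1%:R * L)%R.
  by rewrite -ler_pdivrMr // ltW.
have e1 : (m * (ln F *+ k.+1) = - (k.+1%:R * L))%R.
  by rewrite -mulr_natr /L; ring.
rewrite e1 in lnS.
have -> : ((a - 1)^-1 = - (1 - a)^-1)%R by rewrite -invrN opprB.
rewrite mulNr -mulrN.
have -> : ((1 - a)^-1 * L / 2 * k.+1%:R = (1 - a)^-1 * (k.+1%:R * L / 2))%R by ring.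
rewrite ler_pM2l //.
move: kL lnS; set X := (k.+1%:R * L)%R; move=> kL lnS.
lra.
Qed.

End Asym.
Section Lim.
Variable R : realType.
Local Open Scope ereal_scope.

Lemma limsup_ge (u : (\bar R)^nat) (c : \bar R) K :
  (forall k, (K <= k)%N -> c <= u k) -> c <= limn_esup u.
Proof.
move=> h; rewrite limn_esup_lim; apply: lime_ge; first exact: is_cvg_esups.
apply: nearW => m; apply: (le_trans (h (maxn m K) (leq_maxr _ _))).
by apply: ereal_sup_ubound; exists (maxn m K) => //=; rewrite leq_maxl.
Qed.

Lemma limsup_le (u : (\bar R)^nat) (c : \bar R) :
  (forall k, u k <= c) -> limn_esup u <= c.
Proof.
move=> h; rewrite limn_esup_lim; apply: lime_le; first exact: is_cvg_esups.
apply: nearW => m; apply: ge_ereal_sup => _ [k _ <-]; exact: h.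
Qed.

End Lim.
Section DT.
Variable R : realType.
Local Notation C := (R[i]).
Local Notation adj M := (map_mx Num.conj (trmx M)).

Lemma ReD (x y : C) : complex.Re (x + y) = complex.Re x + complex.Re y.
Proof. by case: x => ? ?; case: y. Qed.

Lemma Re0 : complex.Re (0 : C) = 0.
Proof. by []. Qed.

Lemma wself_ge (a x : R) : x <= x `^ a * x `^ (1 - a) /\ 0 <= x `^ a * x `^ (1 - a).
Proof.
split; last by rewrite mulr_ge0 ?powR_ge0.
have [x0|x0] := leP 0 x; first by rewrite powR_self.
by rewrite !lt0_powR1 // mulr1 ltW // (lt_le_trans x0).
Qed.

Lemma renyi_self (a : R) (p : bool -> R) : 0 < a < 1 -> p true + p false = 1 ->
  (renyi_div a p p <= 0)%E.
Proof.
move=> /andP[a0 a1] s1; rewrite /renyi_div big_bool /=.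
have [h1 h2] := wself_ge a (p true); have [h3 h4] := wself_ge a (p false).
set s := (_ + _)%R.
have s1' : 1 <= s by rewrite /s; lra.
have -> : (s == 0) = false by apply/negbTE; rewrite gt_eqF // (lt_le_trans _ s1').
rewrite lee_fin nmulr_rle0 ?invr_lt0 ?subr_lt0 //.
exact: ln_ge0.
Qed.

Lemma tc_sum n (T X : 'M[C]_n) : test_channel T X true + test_channel T X false = complex.Re (\tr X).
Proof.
rewrite /test_channel -ReD -mxtraceD mulmxBr mulmx1 addrC subrK //.
Qed.

Lemma is_test0 n : is_test (0 : 'M[C]_n).
Proof.
have a1 : adj (1%:M : 'M[C]_n) = 1%:M.
  by rewrite trmx1 map_mx1.
split.
  have := @psd_udu R n (1%:M : 'M[C]_n) (0 : 'rV[C]_n) (fun i => ltac:(by rewrite mxE)).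
  by rewrite a1 mul1mx mulmx1 linear0.
have := @psd_udu R n (1%:M : 'M[C]_n) (const_mx 1 : 'rV[C]_n) (fun i => ltac:(by rewrite mxE ler01)).
by rewrite a1 mul1mx mulmx1 diag_const_mx subr0.
Qed.

Lemma Dtest_ge0 (a : R) n (X Y : 'M[C]_n) : 0 < a < 1 ->
  complex.Re (\tr X) = 1 -> complex.Re (\tr Y) = 1 -> (0 <= D_test a X Y)%E.
Proof.
move=> /andP[a0 a1] hX hY; apply: ereal_sup_ubound; exists 0; first exact: is_test0.
rewrite /renyi_div big_bool /= /test_channel !mulmx0 mxtrace0 Re0 subr0 !mulmx1 hX hY.
rewrite !powR0 ?mul0r ?powR1 ?mulr1 ?add0r ?ln1 ?mulr0 ?oner_eq0 //.
- by rewrite subr_eq0 eq_sym lt_eqF.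
- by rewrite gt_eqF.
Qed.

Lemma Dtest_self (a : R) n (X : 'M[C]_n) : 0 < a < 1 ->
  complex.Re (\tr X) = 1 -> D_test a X X = 0%E.
Proof.
move=> ha hX; apply/le_anti/andP; split; last by apply: Dtest_ge0.
apply: ge_ereal_sup => _ [T _ <-]; apply: renyi_self => //.
by rewrite tc_sum.
Qed.

End DT.
Section Core.
Variable R : realType.
Local Notation C := (R[i]).
Local Notation adj M := (map_mx Num.conj (trmx M)).
Local Notation cr x := (real_complex R x).

Lemma Re_sum (I : finType) (P : pred I) (f : I -> C) :
  complex.Re (\sum_(i | P i) f i) = \sum_(i | P i) complex.Re (f i).
Proof. exact: (big_morph _ (@ReD R) (@Re0 R)). Qed.

Lemma tr_conj_diag N (X V : 'M[C]_N) (e : 'rV[C]_N) :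
  \tr (X *m (adj V *m diag_mx e *m V)) = \sum_x (V *m X *m adj V) x x * e 0 x.
Proof.
rewrite !mulmxA mxtrace_mulC !mulmxA mul_mx_diag /mxtrace.
by under eq_bigr => x _ do rewrite mxE.
Qed.

Lemma Re_tr_form N (X V : 'M[C]_N) (P : 'I_N -> R) (b : pred 'I_N) :
  (forall x, (V *m X *m adj V) x x = cr (P x)) ->
  complex.Re (\tr (X *m (adj V *m diag_mx (\row_x ((b x)%:R : C)) *m V)))
  = \sum_(x | b x) P x.
Proof.
move=> hP; rewrite tr_conj_diag Re_sum [RHS]big_mkcond /=.
apply: eq_bigr => x _; rewrite hP mxE.
by case: (b x); rewrite ?mulr1 ?mulr0 /=.
Qed.

End Core.
Section TestK.
Variable R : realType.
Local Notation C := (R[i]).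
Local Notation adj M := (map_mx Num.conj (trmx M)).
Local Notation cr x := (real_complex R x).

Lemma renyi_eq (a : R) N (X Y T T' : 'M[C]_N) (pa pb qa qb : R) :
  1%:M - T = T' -> complex.Re (\tr (X *m T)) = pa -> complex.Re (\tr (Y *m T)) = qa ->
  complex.Re (\tr (X *m T')) = pb -> complex.Re (\tr (Y *m T')) = qb ->
  renyi_div a (test_channel T X) (test_channel T Y) =
  (if pa `^ a * qa `^ (1 - a) + pb `^ a * qb `^ (1 - a) == 0 then +oo%E
   else ((a - 1)^-1 * ln (pa `^ a * qa `^ (1 - a) + pb `^ a * qb `^ (1 - a)))%:E).
Proof.
move=> TT e1 e2 e3 e4.
by rewrite /renyi_div big_bool /test_channel TT e1 e2 e3 e4.
Qed.

Lemma test_k (a : R) n (U rho sigma : 'M[C]_n) (p q : 'I_n -> R) k :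
  0 < a < 1 -> adj U *m U = 1%:M ->
  (forall i, (U *m rho *m adj U) i i = cr (p i)) ->
  (forall i, (U *m sigma *m adj U) i i = cr (q i)) ->
  (forall i, 0 <= p i) -> (forall i, 0 <= q i) ->
  \sum_i p i = 1 -> \sum_i q i = 1 ->
  exists S : R, [/\ 0 <= S,
    S <= ((\sum_i p i `^ a * q i `^ (1 - a)) ^+ k.+1) `^ (1 - a)
       + ((\sum_i p i `^ a * q i `^ (1 - a)) ^+ k.+1) `^ a &
   ((if S == 0%R then +oo else ((a - 1)^-1 * ln S)%:E)
      <= D_test a (ntensmx rho k.+1) (ntensmx sigma k.+1))%E].
Proof.
move=> ha hU hp hq p0 q0 sp sq.
set F := \sum_i p i `^ a * q i `^ (1 - a).
set Uk := ntensmx U k.+1.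
have hUk : adj Uk *m Uk = 1%:M by rewrite /Uk ntens_adj ntens_mul hU ntens1.
have hM X : Uk *m ntensmx X k.+1 *m adj Uk = ntensmx (U *m X *m adj U) k.+1.
  by rewrite /Uk ntens_adj !ntens_mul.
set P := dg p k; set Q := dg q k.
have hPd x : (Uk *m ntensmx rho k.+1 *m adj Uk) x x = cr (P x).
  by rewrite hM; apply: ntens_diag.
have hQd x : (Uk *m ntensmx sigma k.+1 *m adj Uk) x x = cr (Q x).
  by rewrite hM; apply: ntens_diag.
have P0 x : 0 <= P x by apply: dg_ge0.
have Q0 x : 0 <= Q x by apply: dg_ge0.
have sP : \sum_x P x = 1 by rewrite /P dg_sum sp expr1n.
have sQ : \sum_x Q x = 1 by rewrite /Q dg_sum sq expr1n.
have sW : \sum_x P x `^ a * Q x `^ (1 - a) = F ^+ k.+1.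
  by rewrite /P /Q; under eq_bigr do rewrite dg_w //; rewrite dg_sum.
set b := fun x => Q x <= P x.
set T := adj Uk *m diag_mx (\row_x ((b x)%:R : C)) *m Uk.
set T' := adj Uk *m diag_mx (\row_x ((~~ b x)%:R : C)) *m Uk.
have TT : 1%:M - T = T'.
  apply/eqP; rewrite subr_eq -hUk /T /T' -mulmxDl -mulmxDr -raddfD /=.
  have -> : \row_x ((~~ b x)%:R : C) + \row_x ((b x)%:R : C) = const_mx 1.
    by apply/rowP => x; rewrite !mxE; case: (b x); rewrite /= ?addr0 ?add0r.
  by rewrite diag_const_mx mulmx1.
have testT : is_test T.
  split; first by apply: psd_udu => i; rewrite mxE; case: (b i); rewrite /= ?ler01.
  by rewrite TT; apply: psd_udu => i; rewrite mxE; case: (b i); rewrite /= ?ler01.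
exists ((\sum_(x | b x) P x) `^ a * (\sum_(x | b x) Q x) `^ (1 - a)
  + (\sum_(x | ~~ b x) P x) `^ a * (\sum_(x | ~~ b x) Q x) `^ (1 - a)).
split.
- by rewrite addr_ge0 // mulr_ge0 // powR_ge0.
- by apply: (key_bound ha P0 Q0 sP sQ); rewrite sW.
have e1 : complex.Re (\tr (ntensmx rho k.+1 *m T)) = \sum_(x | b x) P x.
  exact: (@Re_tr_form R _ (ntensmx rho k.+1) Uk P b hPd).
have e2 : complex.Re (\tr (ntensmx sigma k.+1 *m T)) = \sum_(x | b x) Q x.
  exact: (@Re_tr_form R _ (ntensmx sigma k.+1) Uk Q b hQd).
have e3 : complex.Re (\tr (ntensmx rho k.+1 *m T')) = \sum_(x | ~~ b x) P x.
  exact: (@Re_tr_form R _ (ntensmx rho k.+1) Uk P (fun x => ~~ b x) hPd).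
have e4 : complex.Re (\tr (ntensmx sigma k.+1 *m T')) = \sum_(x | ~~ b x) Q x.
  exact: (@Re_tr_form R _ (ntensmx sigma k.+1) Uk Q (fun x => ~~ b x) hQd).
apply: ereal_sup_ubound; exists T => //.
by rewrite (renyi_eq a TT e1 e2 e3 e4).
Qed.

End TestK.
Section Hard.
Variable R : realType.
Local Notation C := (R[i]).
Local Notation adj M := (map_mx Num.conj (trmx M)).
Local Notation cr x := (real_complex R x).

Lemma ge0_complex (z : C) : 0 <= z -> z = cr (complex.Re z) /\ 0 <= complex.Re z.
Proof.
case: z => x y; rewrite lecE /= => /andP[/eqP y0 x0]; split => //.
by rewrite y0.
Qed.

Lemma diag_psd n (X U : 'M[C]_n) i : psdmx X -> 0 <= (U *m X *m adj U) i i.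
Proof.
move=> [_ hX]; have := hX (row i U).
suff -> : (row i U *m X *m (map_mx Num.conj (row i U))^T) 0 0 = (U *m X *m adj U) i i by [].
rewrite -row_mul !mxE; apply: eq_bigr => j _; rewrite !mxE.
by [].
Qed.

Lemma herm_sub n (A B : 'M[C]_n) : A \is hermsymmx -> B \is hermsymmx -> A - B \is hermsymmx.
Proof.
move=> /is_hermitianmxP hA /is_hermitianmxP hB; apply/is_hermitianmxP.
move: hA hB; rewrite !expr0 !scale1r => hA hB.
by rewrite linearB /= map_mxB -hA -hB.
Qed.

End Hard.
Section Hard2.
Variable R : realType.
Local Notation C := (R[i]).
Local Notation adj M := (map_mx Num.conj (trmx M)).
Local Notation cr x := (real_complex R x).

Lemma mxE_sub n (A B : 'M[C]_n) i j : (A - B) i j = A i j - B i j.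
Proof. by rewrite !mxE. Qed.

Lemma Re_tr_conj n (P X : 'M[C]_n) : adj P *m P = 1%:M ->
  \sum_i complex.Re ((P *m X *m adj P) i i) = complex.Re (\tr X).
Proof.
move=> PP; rewrite -Re_sum; congr complex.Re.
by rewrite -/(mxtrace _) mxtrace_mulC mulmxA PP mul1mx.
Qed.

Lemma hard (a : R) n (rho sigma : 'M[C]_n) : 0 < a < 1 ->
  density rho -> density sigma -> rho != sigma ->
  exists c : R, 0 < c /\ exists K, forall k, (K <= k)%N ->
   (c%:E <= ((k%:R)^-1)%:E * D_test a (ntensmx rho k) (ntensmx sigma k))%E.
Proof.
move=> ha [[hr pr] tr] [[hs ps] ts] neq.
have hD : rho - sigma \is hermsymmx by apply: herm_sub.
set P := spectralmx (rho - sigma); set sp := spectral_diag (rho - sigma).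
have Pu : P \is unitarymx by apply: spectral_unitarymx.
have /orthomx_spectralP eD := hermitian_normalmx hD.
have iP : invmx P = adj P by rewrite invmx_unitary.
have PP : P *m adj P = 1%:M by apply/unitarymxP.
have PP' : adj P *m P = 1%:M.
  by have := mulmxKtV (1%:M : 'M[C]_n) Pu erefl; rewrite mul1mx.
set M := P *m rho *m adj P; set N := P *m sigma *m adj P.
have MN : M - N = diag_mx sp.
  rewrite /M /N -mulmxBl -mulmxBr eD -/P -/sp iP.
  by rewrite !mulmxA PP mul1mx -mulmxA PP mulmx1.
have [j spj] : exists j, sp 0 j != 0.
  case: (pickP (fun j => sp 0 j != 0)) => [j hj|h]; first by exists j.
  exfalso; move/negP: neq; apply.
  have sp0 : sp = 0 by apply/rowP => j; rewrite mxE; apply/eqP; move: (h j) => /negbFE.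
  by rewrite -subr_eq0 eD -/P -/sp sp0 linear0 mulmx0 mul0mx.
pose p i := complex.Re (M i i); pose q i := complex.Re (N i i).
have Mp i : M i i = cr (p i) /\ 0 <= p i by apply: ge0_complex; apply: diag_psd.
have Nq i : N i i = cr (q i) /\ 0 <= q i by apply: ge0_complex; apply: diag_psd.
have sp1 : \sum_i p i = 1 by rewrite /p /M Re_tr_conj // tr.
have sq1 : \sum_i q i = 1 by rewrite /q /N Re_tr_conj // ts.
have pq : p j != q j.
  apply/eqP => e; move: spj.
  have <- : diag_mx sp j j = sp 0 j by rewrite mxE eqxx mulr1n.
  by rewrite -MN mxE_sub (Mp j).1 (Nq j).1 e subrr eqxx.
set F := \sum_i p i `^ a * q i `^ (1 - a).
have F1 : F < 1 by apply: (fid_lt1 ha (fun i => (Mp i).2) (fun i => (Nq i).2) sp1 sq1 pq).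
have F0 : 0 <= F by apply: sumr_ge0 => i _; rewrite mulr_ge0 ?powR_ge0.
have [c [c0 [K hK]]] := asym ha (introT andP (conj F0 F1)).
exists c; split => //; exists K.+1 => [[|k]] // Kk.
have [S [S0 SS hS]] := test_k k ha PP' (fun i => (Mp i).1) (fun i => (Nq i).1)
  (fun i => (Mp i).2) (fun i => (Nq i).2) sp1 sq1.
have h := le_trans (hK k Kk S S0 SS) hS.
have kp : (0 < (k.+1%:R : R)) by rewrite ltr0n.
apply: le_trans (lee_wpmul2l _ h); last by rewrite lee_fin invr_ge0 ltW.
by rewrite -EFinM mulrCA mulVf ?mulr1 // gt_eqF.
Qed.
End Hard2.
Theorem mainTheorem11 (R : realType) (alpha : R) (n : nat)
  (rho sigma : 'M[R[i]]_n) :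
  0 < alpha < 1 -> density rho -> density sigma ->
  (0 <= D_test_bar alpha rho sigma)%E /\
  (D_test_bar alpha rho sigma = 0%E <-> rho = sigma).
Proof.
move=> ha dr ds.
have trk (X : 'M[R[i]]_n) k : density X -> complex.Re (\tr (ntensmx X k)) = 1.
  by move=> [_ tX]; rewrite ntens_tr tX expr1n.
have u0 k : (0 <= ((k%:R)^-1)%:E * D_test alpha (ntensmx rho k) (ntensmx sigma k))%E.
  apply: mule_ge0; first by rewrite lee_fin invr_ge0 ler0n.
  by apply: Dtest_ge0 => //; apply: trk.
have H0 : (0 <= D_test_bar alpha rho sigma)%E.
  by rewrite /D_test_bar; apply: (@limsup_ge _ _ _ 0%N) => k _; exact: u0.
split => //; split.
  move=> h0; apply/eqP; apply: contraT => neq.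
  have [c [c0 [K hK]]] := hard ha dr ds neq.
  have := limsup_ge hK; rewrite -/(D_test_bar alpha rho sigma) h0 lee_fin.
  by rewrite leNgt c0.
move=> e; subst sigma; apply/le_anti; rewrite H0 andbT.
rewrite /D_test_bar; apply: limsup_le => k.
by rewrite Dtest_self ?mule0 //; apply: trk.
Qed.
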